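(* Let $\mathfrak{g}$ be a Leibniz algebra and $\mathfrak{h}$ a two-sided ideal of $\mathfrak{g}$ with $\mathfrak{h} \subseteq Z_{\mathrm{Lie}}(\mathfrak{g})$. (a) $\mathfrak{g}$ is $\mathrm{Lie}$-nilpotent if and only if $\mathfrak{g}/\mathfrak{h}$ is $\mathrm{Lie}$-nilpotent. (b) If $f:\mathfrak{g}\twoheadrightarrow\mathfrak{q}$ is a $\mathrm{Lie}$-central extension of a Leibniz algebra $\mathfrak{q}$, then $\mathfrak{g}$ is $\mathrm{Lie}$-nilpotent if and only if $\mathfrak{q}$ is $\mathrm{Lie}$-nilpotent.
   Context: Fix a field $\mathbb{K}$ with $\frac12\in\mathbb{K}$. A Leibniz algebra is a $\mathbb{K}$-vector space with a bilinear bracket satisfying $[x,[y,z]]=[[x,y],z]-[[x,z],y]$. For two-sided ideals $\mathfrak{m},\mathfrak{n}$ of a Leibniz algebra $\mathfrak{g}$, the $\mathrm{Lie}$-commutator $[\mathfrak{m},\mathfrak{n}]_{\mathrm{Lie}}$ is the subspace spanned by all $[m,n]+[n,m]$, $m\in\mathfrak{m}$, $n\in\mathfrak{n}$. The $\mathrm{Lie}$-center is $Z_{\mathrm{Lie}}(\mathfrak{g})=\{z\in\mathfrak{g}: [q,z]+[z,q]=0 \text{ for all } q\in\mathfrak{g}\}$. A surjective homomorphism $f:\mathfrak{g}\to\mathfrak{q}$ is a $\mathrm{Lie}$-central extension if $\ker f\subseteq Z_{\mathrm{Lie}}(\mathfrak{g})$. The lower $\mathrm{Lie}$-central series is $\mathfrak{g}^{[1]}=\mathfrak{g}$,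 $\mathfrak{g}^{[i]}=[\mathfrak{g}^{[i-1]},\mathfrak{g}]_{\mathrm{Lie}}$; $\mathfrak{g}$ is $\mathrm{Lie}$-nilpotent if $\mathfrak{g}^{[k]}=0$ for some $k$. *)

(* Defs.v *)
From HB Require Import structures.
From mathcomp Require Import all_boot all_order all_algebra.
Set Implicit Arguments. Unset Strict Implicit. Unset Printing Implicit Defensive.
Import GRing.Theory.
Local Open Scope ring_scope.

Section Leibniz.
Variable K : fieldType.

Definition is_leibniz (V : lmodType K) (br : V -> V -> V) : Prop :=
  (forall (a : K) (x y z : V), br (a *: x + y) z = a *: br x z + br y z) /\
  (forall (a : K) (x y z : V), br x (a *: y + z) = a *: br x y + br x z) /\
  (forall x y z : V, br x (br y z) = br (br x y) z - br (br x z) y).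

Definition is_subspace (V : lmodType K) (S : V -> Prop) : Prop :=
  S 0 /\ (forall (a : K) (x y : V), S x -> S y -> S (a *: x + y)).

Definition is_ideal (V : lmodType K) (br : V -> V -> V) (I : V -> Prop) : Prop :=
  is_subspace I /\ (forall x i, I i -> I (br x i) /\ I (br i x)).

(* [m, n]_Lie : the subspace spanned by all [m,n] + [n,m]. *)
Definition lie_comm (V : lmodType K) (br : V -> V -> V) (M N : V -> Prop) : V -> Prop :=
  fun x => forall S : V -> Prop, is_subspace S ->
    (forall m n, M m -> N n -> S (br m n + br n m)) -> S x.

Definition lie_center (V : lmodType K) (br : V -> V -> V) : V -> Prop :=
  fun z => forall q, br q z + br z q = 0.

(* Lower Lie-central series: lcs br 0 = g = g^[1], lcs br (S i) = g^[i+2]. *)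
Fixpoint lcs (V : lmodType K) (br : V -> V -> V) (i : nat) : V -> Prop :=
  match i with
  | O => fun _ => True
  | S j => lie_comm br (lcs br j) (fun _ => True)
  end.

Definition lie_nilpotent (V : lmodType K) (br : V -> V -> V) : Prop :=
  exists k, forall x, lcs br k x -> x = 0.

Definition is_hom (V W : lmodType K) (brV : V -> V -> V) (brW : W -> W -> W)
  (f : V -> W) : Prop :=
  (forall (a : K) (x y : V), f (a *: x + y) = a *: f x + f y) /\
  (forall x y, f (brV x y) = brW (f x) (f y)).

Definition surj (V W : Type) (f : V -> W) : Prop := forall w, exists v, f v = w.

Definition lie_central_ext (V W : lmodType K) (brV : V -> V -> V)
  (brW : W -> W -> W) (f : V -> W) : Prop :=
  is_hom brV brW f /\ surj f /\ (forall x, f x = 0 -> lie_center brV x).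

End Leibniz.

(* Main.v *)
Require Import Defs.
From mathcomp Require Import all_boot all_order all_algebra.
Local Open Scope ring_scope.
Import GRing.Theory.

Lemma lcs_subspace (K : fieldType) (V : lmodType K) (br : V -> V -> V) i :
  is_subspace (lcs br i).
Proof.
case: i => [|i] /=; first by split.
split; first by move=> S [S0 _] _.
move=> a x y Hx Hy S HS Hg; have [_ HS2] := HS; apply: HS2.
  exact: Hx. exact: Hy.
Qed.

Lemma hom0 (K : fieldType) (V W : lmodType K) (brV : V -> V -> V)
  (brW : W -> W -> W) (f : V -> W) : is_hom brV brW f -> f 0 = 0.
Proof.
move=> [Hl _]; have := Hl (-1) 0 0.
by rewrite scaler0 addr0 scaleN1r addNr.
Qed.

Arguments hom0 {K V W brV brW f}.

Lemma lcs_image (K : fieldType) (V W : lmodType K) (brV : V -> V -> V)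
  (brW : W -> W -> W) (f : V -> W) :
  is_hom brV brW f -> surj f ->
  forall i y, lcs brW i y -> exists x, lcs brV i x /\ f x = y.
Proof.
move=> Hf Hs; elim=> [|i IH] y /=.
  by move=> _; have [x Hx] := Hs y; exists x.
move=> Hy; apply: (Hy (fun y => exists x, lcs brV i.+1 x /\ f x = y)).
  split.
    exists 0; split; last exact: hom0 Hf.
    by have [] := @lcs_subspace _ _ brV i.+1.
  move=> a _ _ [x [Hx <-]] [x' [Hx' <-]]; exists (a *: x + x'); split.
    by have [_ H] := @lcs_subspace _ _ brV i.+1; apply: H.
  by case: Hf => Hl _; rewrite Hl.
move=> m n Hm _; have [x [Hx <-]] := IH m Hm; have [x' <-] := Hs n.
exists (brV x x' + brV x' x); split.
  by move=> S HS Hg; apply: Hg.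
case: Hf => Hl Hb; rewrite -(scale1r (brV x x')) Hl scale1r !Hb //.
Qed.

Arguments lcs_image {K V W brV brW f}.

Lemma lcs_pre (K : fieldType) (V W : lmodType K) (brV : V -> V -> V)
  (brW : W -> W -> W) (f : V -> W) :
  is_hom brV brW f ->
  forall i x, lcs brV i x -> lcs brW i (f x).
Proof.
move=> Hf; elim=> [|i IH] x //= Hx; apply: (Hx (fun x => lcs brW i.+1 (f x))).
  split.
    rewrite (hom0 Hf); by have [] := @lcs_subspace _ _ brW i.+1.
  move=> a y z Hy Hz; case: (Hf) => Hl _; rewrite Hl.
  by have [_ H] := @lcs_subspace _ _ brW i.+1; apply: H.
move=> m n Hm _; case: (Hf) => Hl Hb.
rewrite -(scale1r (brV m n)) Hl scale1r !Hb.
by move=> S HS Hg; apply: Hg => //; apply: IH.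
Qed.

Arguments lcs_pre {K V W brV brW f}.

Lemma partb (K : fieldType) (G : lmodType K) (br : G -> G -> G)
  (Q : lmodType K) (brQ : Q -> Q -> Q) (f : G -> Q) :
  lie_central_ext br brQ f -> (lie_nilpotent br <-> lie_nilpotent brQ).
Proof.
move=> [Hf [Hs Hc]]; split.
  move=> [k Hk]; exists k => y Hy.
  have [x [Hx <-]] := lcs_image Hf Hs _ _ Hy.
  by rewrite (Hk x Hx) (hom0 Hf).
move=> [k Hk]; exists k.+1 => x /= Hx; apply: (Hx (fun x => x = 0)).
  split => // a y z -> ->; by rewrite scaler0 addr0.
move=> m n Hm _.
have Hz : lie_center br m by apply: Hc; apply: Hk; exact: lcs_pre Hf _ _ Hm.
by rewrite addrC; apply: Hz.
Qed.

Arguments partb {K G br Q brQ f}.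

Theorem mainTheorem1 (K : fieldType) (h2 : (2 : K) != 0)
  (G : lmodType K) (br : G -> G -> G) (hG : is_leibniz br) :
  (* (a): g/h is represented by any surjective hom with kernel exactly h *)
  (forall h : G -> Prop, is_ideal br h -> (forall x, h x -> lie_center br x) ->
     forall (Q : lmodType K) (brQ : Q -> Q -> Q) (f : G -> Q),
       is_leibniz brQ -> is_hom br brQ f -> surj f ->
       (forall x, f x = 0 <-> h x) ->
       (lie_nilpotent br <-> lie_nilpotent brQ)) /\
  (* (b) *)
  (forall (Q : lmodType K) (brQ : Q -> Q -> Q) (f : G -> Q),
     is_leibniz brQ -> lie_central_ext br brQ f ->
     (lie_nilpotent br <-> lie_nilpotent brQ)).
Proof.
split.
  move=> h _ hc Q brQ f _ Hf Hs Hk; apply: partb; split; [exact: Hf|split; [exact: Hs|]].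
  by move=> x Hx; apply: hc; apply/Hk.
by move=> Q brQ f _; apply: partb.
Qed.
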